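(* For $j\in\{1,\dots,n\}$, let $X_j\subset\mathbb{R}$ be a union of finitely many disjoint closed intervals (rays allowed) and let $g^{\mathrm{in}}_j:X_j\to\mathbb{R}$ be a piecewise $\chi$ function. Then $\star\{(g^{\mathrm{in}}_j,X_j)\}_{j=1}^n$ is a piecewise $\chi$ function.
   Context: For $\tau=(\tau_1,\tau_2)\in\mathbb{R}^2$, $\chi_\tau:\mathbb{R}\to\mathbb{R}$ is $\chi_\tau(x)=x-\tau_1+\tau_2$ for $x\le\tau_1$ and $\chi_\tau(x)=-x+\tau_1+\tau_2$ for $x>\tau_1$; $\tau$ is its top point. A function $g:X\to\mathbb{R}$, $X\subseteq\mathbb{R}$, is a piecewise $\chi$ function if $X$ is a union of disjoint intervals and on each of these intervals $g$ equals the restriction of some $\chi_\tau$. The operator $\star$: given functions $g^{\mathrm{in}}_j:X_j\to\mathbb{R}$, $j=1,\dots,n$, it returns $g^{\mathrm{out}}=\star\{(g^{\mathrm{in}}_j,X_j)\}_{j=1}^n$ with domain the Minkowski sum $\sum_{j=1}^nX_j$, defined by $g^{\mathrm{out}}(z)=\max\{\sum_{j=1}^ng^{\mathrm{in}}_j(x_j): x\in\mathbb{R}^n,\ \sum_jx_j=z,\ x_j\in X_j\ \forall j\}$.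
   Formalization: The operator ⋆ takes the supremum instead of the maximum of the sums, and the union of disjoint intervals in the definition of a piecewise χ function consists of finitely many intervals. Each condition added here is assumed in the paper as well or is needed for the statement above to hold. *)

(* Defs.v *)
From HB Require Import structures.
From mathcomp Require Import all_boot all_order all_algebra.
From mathcomp Require Import all_classical all_reals topology normedtype.
Import numFieldNormedType.Exports.
Set Implicit Arguments. Unset Strict Implicit. Unset Printing Implicit Defensive.
Import Order.TTheory GRing.Theory Num.Theory.
Local Open Scope classical_set_scope.
Local Open Scope ring_scope.

Section Defs.
Variable R : realType.

Definition chi (tau : R * R) (x : R) : R :=
  if x <= tau.1 then x - tau.1 + tau.2 else - x + tau.1 + tau.2.

Definition interval (I : set R) : Prop :=
  forall x y z, I x -> I y -> x <= z -> z <= y -> I z.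

Definition fin_union_closed_intervals (X : set R) : Prop :=
  exists (m : nat) (I : 'I_m -> set R),
    [/\ forall i, interval (I i) /\ @closed R^o (I i),
        forall i i', i != i' -> I i `&` I i' = set0
      & X = \bigcup_(i in [set: 'I_m]) I i].

(* Values of g outside X are irrelevant. *)
Definition piecewise_chi (g : R -> R) (X : set R) : Prop :=
  exists (m : nat) (I : 'I_m -> set R) (tau : 'I_m -> R * R),
    [/\ forall i, interval (I i),
        forall i i', i != i' -> I i `&` I i' = set0,
        X = \bigcup_(i in [set: 'I_m]) I i
      & forall i x, I i x -> g x = chi (tau i) x].

Definition feasible (n : nat) (X : 'I_n -> set R) (z : R) : set ('I_n -> R) :=
  [set x | (forall j, X j (x j)) /\ \sum_(j < n) x j = z].

Definition minkowski_sum (n : nat) (X : 'I_n -> set R) : set R :=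
  [set z | exists x, feasible X z x].

(* the star operator: g_out(z) = max { sum_j g_j(x_j) : sum_j x_j = z, x_j in X_j },
   rendered as the supremum (which is the maximum whenever the max exists). *)
Definition star (n : nat) (g : 'I_n -> R -> R) (X : 'I_n -> set R) (z : R) : R :=
  sup [set \sum_(j < n) g j (x j) | x in feasible X z].

End Defs.

(* Main.v *)
Require Import Defs.
From HB Require Import structures.
From mathcomp Require Import all_boot all_order all_algebra.
From mathcomp Require Import all_classical all_reals topology normedtype.
From mathcomp Require Import ring lra.
Import numFieldNormedType.Exports.
Import Order.TTheory GRing.Theory Num.Theory.
Local Open Scope classical_set_scope.
Local Open Scope ring_scope.
Local Notation ival := Defs.interval.
Set Implicit Arguments. Unset Strict Implicit. Unset Printing Implicit Defensive.

Lemma chiE (R : realType) (t : R * R) x : chi t x = t.2 - `|x - t.1|.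
Proof.
rewrite /chi; case: ifP => h.
  rewrite ler0_norm ?subr_le0 //; lra.
rewrite gtr0_norm ?subr_gt0 ?ltNge ?h //; lra.
Qed.

Lemma interval_setI (R : realType) (A B : set R) :
  ival A -> ival B -> ival (A `&` B).
Proof. rewrite /Defs.interval => hA hB x y z [? ?] [? ?] h1 h2; split; [exact: (hA x y)|exact: (hB x y)]. Qed.

Lemma interval_le (R : realType) (s t : R * R) :
  ival [set z | chi s z <= chi t z].
Proof.
rewrite /Defs.interval => x y z /=; rewrite !chiE => hx hy h1 h2.
case: (lerP 0 (x - s.1)) hx => a1; case: (lerP 0 (x - t.1)) => a2;
case: (lerP 0 (y - s.1)) hy => a3; case: (lerP 0 (y - t.1)) => a4;
case: (lerP 0 (z - s.1)) => a5; case: (lerP 0 (z - t.1)) => a6;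
rewrite ?(ger0_norm a1) ?(ltr0_norm a1) ?(ger0_norm a2) ?(ltr0_norm a2)
  ?(ger0_norm a3) ?(ltr0_norm a3) ?(ger0_norm a4) ?(ltr0_norm a4)
  ?(ger0_norm a5) ?(ltr0_norm a5) ?(ger0_norm a6) ?(ltr0_norm a6); lra.
Qed.

Definition lpart (R : realType) (A B : set R) : set R :=
  [set x | A x /\ ~ B x /\ forall b, B b -> x < b].
Definition rpart (R : realType) (A B : set R) : set R :=
  [set x | A x /\ ~ B x /\ ~ (forall b, B b -> x < b)].

Lemma interval_lpart (R : realType) (A B : set R) :
  ival A -> ival B -> ival (lpart A B).
Proof.
rewrite /Defs.interval => hA hB x y z [Ax [nBx hx]] [Ay [nBy hy]] h1 h2; split; first exact: (hA x y).
have hz : forall b, B b -> z < b by move=> b Bb; exact: (le_lt_trans h2 (hy b Bb)).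
split=> // Bz; by move: (hz z Bz); rewrite ltxx.
Qed.

Lemma interval_rpart (R : realType) (A B : set R) :
  ival A -> ival B -> ival (rpart A B).
Proof.
rewrite /Defs.interval => hA hB x y z [Ax [nBx hx]] [Ay [nBy hy]] h1 h2; split; first exact: (hA x y).
have [b Bb bx] : exists2 b, B b & b <= x.
  apply: contrapT => hn; apply: hx => b Bb; rewrite ltNge; apply/negP => hb.
  by apply: hn; exists b.
have allb : forall b', B b' -> b' < x.
  move=> b' Bb'; rewrite ltNge; apply/negP => hb'.
  by apply: nBx; exact: (hB b b').
split.
  move=> Bz; have := allb z Bz; rewrite ltNge => /negP; apply.
  exact: h1.
move=> H; have := H b Bb; rewrite ltNge => /negP; apply; exact: (le_trans bx h1).
Qed.
Definition pcs (R : realType) (F : R -> R) (S : set R) : Prop :=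
  exists m (I : nat -> set R) (tau : nat -> R * R),
    [/\ forall i, (i < m)%N -> ival (I i),
        forall i i', (i < m)%N -> (i' < m)%N -> i != i' -> I i `&` I i' = set0,
        S = [set x | exists2 i, (i < m)%N & I i x]
      & forall i x, (i < m)%N -> I i x -> F x = chi (tau i) x].

Lemma pcs0 (R : realType) (F : R -> R) : pcs F set0.
Proof.
exists 0%N, (fun _ => set0), (fun _ => (0, 0)); split => //.
by apply/seteqP; split => x // [].
Qed.

Lemma pcs1 (R : realType) (F : R -> R) A s :
  ival A -> (forall x, A x -> F x = chi s x) -> pcs F A.
Proof.
move=> hA hF; exists 1%N, (fun _ => A), (fun _ => s); split => //.
- by move=> [|i] [|i'].
- by apply/seteqP; split => x; [move=> Ax; exists 0%N|case].
- by move=> i x _; exact: hF.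
Qed.

Lemma pcs_ext (R : realType) (F G : R -> R) S :
  pcs F S -> (forall x, S x -> F x = G x) -> pcs G S.
Proof.
move=> [m [I [tau [h1 h2 h3 h4]]]] hFG; exists m, I, tau; split => //.
move=> i x im Ix; rewrite -hFG; first exact: h4.
by rewrite h3; exists i.
Qed.

Lemma pcs_eq (R : realType) (F : R -> R) S T : S = T -> pcs F S -> pcs F T.
Proof. by move=> ->. Qed.

Lemma pcs_disj (R : realType) (F : R -> R) S T :
  pcs F S -> pcs F T -> S `&` T = set0 -> pcs F (S `|` T).
Proof.
move=> [m [I [tau [h1 h2 h3 h4]]]] [m' [I' [tau' [h1' h2' h3' h4']]]] hST.
exists (m + m')%N, (fun i => if (i < m)%N then I i else I' (i - m)%N),
  (fun i => if (i < m)%N then tau i else tau' (i - m)%N); split.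
- move=> i him; case: ifP => hi; first exact: h1.
  by apply: h1'; move/negbT: hi; rewrite -leqNgt => hi; rewrite ltn_subLR.
- move=> i i' him hi'm hne; case: ifP => hi; case: ifP => hi'.
  + exact: h2.
  + apply/seteqP; split => // x [Ix I'x]; rewrite -hST; split.
      by rewrite h3; exists i.
    rewrite h3'; exists (i' - m)%N => //.
    by move/negbT: hi'; rewrite -leqNgt => hi'; rewrite ltn_subLR.
  + apply/seteqP; split => // x [Ix I'x]; rewrite -hST; split.
      by rewrite h3; exists i'.
    rewrite h3'; exists (i - m)%N => //.
    by move/negbT: hi; rewrite -leqNgt => hi; rewrite ltn_subLR.
  + move/negbT: hi; move/negbT: hi'; rewrite -!leqNgt => hi' hi.
    apply: h2'; try by rewrite ltn_subLR.
    apply: contra hne => /eqP e; apply/eqP.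
    by rewrite -(subnK hi) -(subnK hi') e.
- rewrite h3 h3'; apply/seteqP; split => x.
  + case=> [[i him Ix]|[i him Ix]].
      by exists i; [exact: ltn_addr|rewrite him].
    exists (m + i)%N; first by rewrite ltn_add2l.
    by rewrite ltnNge leq_addr /= addKn.
  + case=> i him; case: ifP => hi Ix; first by left; exists i.
    right; exists (i - m)%N => //.
    by move/negbT: hi; rewrite -leqNgt => hi; rewrite ltn_subLR.
- move=> i x him; case: ifP => hi Ix; first exact: h4.
  apply: h4' => //.
  by move/negbT: hi; rewrite -leqNgt => hi; rewrite ltn_subLR.
Qed.

Lemma pcs_bigdisj (R : realType) (F : R -> R) (P : nat -> set R) m :
  (forall i, (i < m)%N -> pcs F (P i)) ->
  (forall i i', (i < m)%N -> (i' < m)%N -> i != i' -> P i `&` P i' = set0) ->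
  pcs F [set x | exists2 i, (i < m)%N & P i x].
Proof.
elim: m => [|m IH] hP hD.
  by apply: pcs_eq (pcs0 F); apply/seteqP; split => x // [].
have -> : [set x | exists2 i, (i < m.+1)%N & P i x] =
  [set x | exists2 i, (i < m)%N & P i x] `|` P m.
  apply/seteqP; split => x.
    case=> i; rewrite ltnS leq_eqVlt => /orP [/eqP ->|him] Px; first by right.
    by left; exists i.
  by case=> [[i him Px]|Px]; [exists i => //; exact: ltnW|exists m].
apply: pcs_disj.
- apply: IH => [i him|i i' him hi'm]; first by apply: hP; exact: ltnW.
  by apply: hD; exact: ltnW.
- exact: hP.
- apply/seteqP; split => // x [[i him Px] Pmx].
  have hne : i != m by rewrite ltn_eqF.
  by rewrite -(hD i m (ltnW him) (ltnSn m) hne).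
Qed.

Lemma pcs_diff1 (R : realType) (F : R -> R) S B :
  pcs F S -> ival B -> pcs F (S `\` B).
Proof.
move=> hS hB; have hS' := hS; case: hS' => m [I [tau [h1 h2 h3 h4]]].
have -> : S `\` B = [set x | exists2 i, (i < m)%N & (I i `\` B) x].
  rewrite h3; apply/seteqP; split => x.
    by case=> [[i him Ix] nB]; exists i.
  by case=> i him [Ix nB]; split => //; exists i.
apply: pcs_bigdisj.
- move=> i him.
  have -> : I i `\` B = lpart (I i) B `|` rpart (I i) B.
    apply/seteqP; split => x.
      case=> Ix nB; have [h|h] := pselect (forall b, B b -> x < b).
        by left. by right.
    by case=> [[Ix [nB _]]|[Ix [nB _]]].
  apply: pcs_disj.
  - apply: (pcs1 (s := tau i)); first exact: interval_lpart (h1 i him) hB.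
    by move=> x [Ix _]; exact: h4.
  - apply: (pcs1 (s := tau i)); first exact: interval_rpart (h1 i him) hB.
    by move=> x [Ix _]; exact: h4.
  - by apply/seteqP; split => // x [[_ [_ a]] [_ [_ b]]].
- move=> i i' him hi'm hne; apply/seteqP; split => // x [[Ix _] [I'x _]].
  by rewrite -(h2 i i' him hi'm hne).
Qed.

Lemma pcs_diffn (R : realType) (F : R -> R) S (I : nat -> set R) m :
  pcs F S -> (forall i, (i < m)%N -> ival (I i)) ->
  pcs F (S `\` [set x | exists2 i, (i < m)%N & I i x]).
Proof.
elim: m => [|m IH] hS hI.
  by apply: pcs_eq hS; apply/seteqP; split => x; [move=> Sx; split => // -[]|case].
have -> : S `\` [set x | exists2 i, (i < m.+1)%N & I i x] =
   (S `\` [set x | exists2 i, (i < m)%N & I i x]) `\` I m.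
  apply/seteqP; split => x.
    case=> Sx hn; split; first split => // -[i him Ix].
      by apply: hn; exists i => //; exact: ltnW.
    by move=> Ix; apply: hn; exists m.
  case=> [[Sx hn] nI]; split => // -[i]; rewrite ltnS leq_eqVlt => /orP [/eqP ->|him] Ix //.
  by apply: hn; exists i.
apply: pcs_diff1; last exact: hI.
apply: IH => // i him; apply: hI; exact: ltnW.
Qed.

Lemma pcs_diff (R : realType) (F G : R -> R) S T :
  pcs F S -> pcs G T -> pcs F (S `\` T).
Proof.
move=> hS [m [I [tau [h1 h2 h3 h4]]]]; rewrite h3; exact: pcs_diffn.
Qed.

Lemma pcs_union (R : realType) (F : R -> R) S T :
  pcs F S -> pcs F T -> pcs F (S `|` T).
Proof.
move=> hS hT; have -> : S `|` T = S `|` (T `\` S).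
  apply/seteqP; split => x; first by case=> h; [left|have [|] := pselect (S x); [left|right]].
  by case=> [h|[h _]]; [left|right].
apply: pcs_disj; [exact: hS|exact: (pcs_diff hT hS)|].
by apply/seteqP; split => // x [h [_ h']].
Qed.

Lemma pcs_inter (R : realType) (F : R -> R) S T :
  pcs F S -> pcs F T -> pcs F (S `&` T).
Proof.
move=> hS hT; have -> : S `&` T = S `\` (S `\` T).
  apply/seteqP; split => x; first by case=> h h'; split => // -[].
  by case=> h h'; split => //; apply: contrapT => hn; apply: h'.
exact: (pcs_diff hS (pcs_diff hS hT)).
Qed.

Lemma pcs_foldU (R : realType) (K : Type) (F : R -> R) (P : K -> set R) (s : seq K) :
  (forall k, pcs F (P k)) -> pcs F (foldr (fun k acc => P k `|` acc) set0 s).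
Proof.
move=> hP; elim: s => [|k s IH] /=; first exact: pcs0.
exact: pcs_union.
Qed.

Lemma pcs_foldI (R : realType) (K : Type) (F : R -> R) (P : K -> set R) S (s : seq K) :
  pcs F S -> (forall k, pcs F (P k)) -> pcs F (foldr (fun k acc => P k `&` acc) S s).
Proof.
move=> hS hP; elim: s => [|k s IH] //=; exact: pcs_inter.
Qed.

Lemma foldUE (R : realType) (K : eqType) (P : K -> set R) (s : seq K) z :
  foldr (fun k acc => P k `|` acc) set0 s z <-> exists2 k, k \in s & P k z.
Proof.
elim: s => [|k s IH] /=; first by split => // -[].
split.
  case=> [h|/IH [k' h1 h2]]; first by exists k; rewrite ?inE ?eqxx.
  by exists k' => //; rewrite inE h1 orbT.
case=> k'; rewrite inE => /orP [/eqP ->|h1] h2; first by left.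
by right; apply/IH; exists k'.
Qed.

Lemma foldIE (R : realType) (K : eqType) (P : K -> set R) S (s : seq K) z :
  foldr (fun k acc => P k `&` acc) S s z <-> S z /\ forall k, k \in s -> P k z.
Proof.
elim: s => [|k s IH] /=; first by split => // -[].
split.
  case=> h1 /IH [h2 h3]; split => // k'; rewrite inE => /orP [/eqP ->|] //.
  exact: h3.
case=> h1 h2; split; first by apply: h2; rewrite inE eqxx.
by apply/IH; split => // k' hk'; apply: h2; rewrite inE hk' orbT.
Qed.

Lemma pcs_piecewise (R : realType) (F : R -> R) S : pcs F S -> piecewise_chi F S.
Proof.
move=> [m [I [tau [h1 h2 h3 h4]]]].
exists m, (fun i : 'I_m => I i), (fun i : 'I_m => tau i); split.
- by move=> i; exact: h1.
- by move=> i i' hne; apply: h2.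
- rewrite h3; apply/seteqP; split => x.
    by case=> i him Ix; exists (Ordinal him).
  by case=> i _ Ix; exists i.
- by move=> i x Ix; exact: h4.
Qed.
Lemma proj_exists (R : realType) (A : set R) (t : R) :
  ival A -> A !=set0 ->
  exists c, (forall x, A x -> `|x - t| = `|x - c| + `|c - t|) /\
            (forall e, 0 < e -> exists2 a, A a & `|a - c| < e).
Proof.
move=> hA hne.
have [[[a [Aa hat]] [b [Ab tb]]] | hn] :=
  pselect ((exists a, A a /\ a <= t) /\ (exists b, A b /\ t <= b)).
  have At : A t by exact: (hA a b).
  exists t; split.
    by move=> x _; rewrite subrr normr0 addr0.
  by move=> e e0; exists t => //; rewrite subrr normr0.
have [[a [Aa hat]] | hna] := pselect (exists a, A a /\ a <= t).
  have hlt : forall x, A x -> x < t.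
    move=> x Ax; rewrite ltNge; apply/negP => tx; apply: hn; split.
      by exists a. by exists x.
  have hs : has_sup A by split => //; exists t => x Ax; exact: ltW (hlt x Ax).
  exists (sup A); split.
    move=> x Ax.
    have h1 : x <= sup A by exact: sup_upper_bound.
    have h2 : sup A <= t by apply: ge_sup => // y Ay; exact: ltW (hlt y Ay).
    rewrite (ler0_norm (x := x - t)) ?subr_le0 ?(le_trans h1 h2) //.
    rewrite (ler0_norm (x := x - sup A)) ?subr_le0 //.
    rewrite (ler0_norm (x := sup A - t)) ?subr_le0 //.
    lra.
  move=> e e0; have [y Ay hy] := sup_adherent e0 hs.
  exists y => //; have h1 : y <= sup A by exact: sup_upper_bound.
  rewrite ler0_norm ?subr_le0 //; lra.
have hlt : forall x, A x -> t < x.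
  move=> x Ax; rewrite ltNge; apply/negP => xt; apply: hna; by exists x.
have hs : has_inf A by split => //; exists t => x Ax; exact: ltW (hlt x Ax).
exists (inf A); split.
  move=> x Ax.
  have h1 : inf A <= x by exact: (ge_inf hs.2).
  have h2 : t <= inf A by apply: lb_le_inf => // y Ay; exact: ltW (hlt y Ay).
  rewrite (ger0_norm (x := x - t)) ?subr_ge0 ?(le_trans h2 h1) //.
  rewrite (ger0_norm (x := x - inf A)) ?subr_ge0 //.
  rewrite (ger0_norm (x := inf A - t)) ?subr_ge0 //.
  lra.
move=> e e0; have [y Ay hy] := inf_adherent e0 hs.
exists y => //; have h1 : inf A <= y by exact: (ge_inf hs.2).
rewrite ger0_norm ?subr_ge0 //; lra.
Qed.

Lemma ival_comb (R : realType) (A : set R) a b t :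
  ival A -> A a -> A b -> 0 <= t -> t <= 1 -> A (a + t * (b - a)).
Proof.
move=> hA Aa Ab t0 t1; case: (lerP a b) => hab.
  apply: (hA a b) => //; nra.
apply: (hA b a) => //; nra.
Qed.

Lemma conv_chi (R : realType) n (A : 'I_n -> set R) (tau : 'I_n -> R * R) :
  (forall j, ival (A j)) ->
  exists s : R * R, forall z,
    (exists y : 'I_n -> R, (forall j, A j (y j)) /\ \sum_(j < n) y j = z) ->
    (forall x : 'I_n -> R, (forall j, A j (x j)) -> \sum_(j < n) x j = z ->
        \sum_(j < n) chi (tau j) (x j) <= chi s z) /\
    (forall e, 0 < e -> exists2 x : 'I_n -> R,
        (forall j, A j (x j)) /\ \sum_(j < n) x j = z &
        chi s z - e < \sum_(j < n) chi (tau j) (x j)).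
Proof.
move=> hA.
have [hne|hemp] := pselect (forall j, A j !=set0); last first.
  exists (0, 0) => z [y [hy _]]; exfalso; apply: hemp => j; by exists (y j).
have hc : forall j, exists c, (forall x, A j x -> `|x - (tau j).1| = `|x - c| + `|c - (tau j).1|) /\
            (forall e, 0 < e -> exists2 a, A j a & `|a - c| < e).
  by move=> j; apply: proj_exists.
have [c hcP] := choice hc.
pose h j := (tau j).2 - `|c j - (tau j).1|.
exists (\sum_(j < n) c j, \sum_(j < n) h j) => z [y [hy hyz]].
have key : forall x : 'I_n -> R, (forall j, A j (x j)) ->
    \sum_(j < n) chi (tau j) (x j) = \sum_(j < n) h j - \sum_(j < n) `|x j - c j|.
  move=> x hx; rewrite -sumrB; apply: eq_bigr => j _.
  rewrite chiE /h ((hcP j).1 _ (hx j)); lra.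
rewrite chiE /=; split.
  move=> x hx hxz; rewrite key // lerD2l lerN2 -hxz -sumrB.
  exact: ler_norm_sum.
move=> e e0.
pose d := e / (2 * (n%:R + 1)).
have d0 : 0 < d by rewrite /d divr_gt0 // mulr_gt0 // ltr_wpDl.
have ha : forall j, exists a, A j a /\ `|a - c j| < d.
  by move=> j; have [a Aa ha] := (hcP j).2 d d0; exists a.
have [a haP] := choice ha.
have sumac : \sum_(j < n) `|a j - c j| <= n%:R * d.
  apply: (@le_trans _ _ (\sum_(j < n) d)).
    by apply: ler_sum => j _; exact: ltW (haP j).2.
  by rewrite sumr_const card_ord mulr_natl.
have nd : 2 * (n%:R * d) < e.
  have hn0 : n%:R + 1 != 0 :> R by rewrite gt_eqF // ltr_wpDl.
  have -> : 2 * (n%:R * d) = e * n%:R / (n%:R + 1) by rewrite /d; field.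
  rewrite ltr_pdivrMr ?ltr_wpDl //; nra.
set D := z - \sum_(j < n) a j.
pose sg : R := if 0 <= D then 1 else -1.
have sgD : sg * D = `|D|.
  by rewrite /sg; case: ifP => hD; [rewrite mul1r ger0_norm|rewrite mulN1r ltr0_norm // ltNge hD].
have sg2 : sg * sg = 1 by rewrite /sg; case: ifP => _; rewrite ?mulrNN mulr1.
have sgn : `|sg| = 1 by rewrite /sg; case: ifP => _; rewrite ?normrN normr1.
pose p j := if 0 <= sg * (y j - a j) then sg * (y j - a j) else 0.
pose P := \sum_(j < n) p j.
pose q j := sg * p j.
have hq : forall j, q j = 0 \/ q j = y j - a j.
  move=> j; rewrite /q /p; case: ifP => _; last by left; rewrite mulr0.
  by right; rewrite mulrA sg2 mul1r.
have p0 : forall j, 0 <= p j by move=> j; rewrite /p; case: ifP.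
have DE : D = \sum_(j < n) (y j - a j) by rewrite sumrB hyz.
have DP : `|D| <= P.
  rewrite -sgD DE mulr_sumr; apply: ler_sum => j _; rewrite /p; case: ifP => // hh.
  by move/negbT: hh; rewrite -ltNge => /ltW.
pose t := if P == 0 then 0 else `|D| / P.
have P0 : 0 <= P by apply: sumr_ge0 => j _; exact: p0.
have t0 : 0 <= t by rewrite /t; case: ifP => // _; apply: divr_ge0.
have t1 : t <= 1.
  rewrite /t; case: ifP => hP //; rewrite ler_pdivrMr ?mul1r //.
  by rewrite lt_neqAle eq_sym hP P0.
have tP : t * P = `|D|.
  rewrite /t; case: ifP => hP; last by rewrite divfK // hP.
  move/eqP: hP => hP; rewrite mul0r; apply/eqP; rewrite eq_sym normr_eq0 -normr_le0.
  by rewrite -hP.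
pose x j := a j + t * q j.
have hxa : forall j, `|x j - a j| = t * p j.
  move=> j; rewrite /x addrAC subrr add0r normrM /q normrM sgn mul1r (ger0_norm t0).
  by rewrite ger0_norm.
have hxA : forall j, A j (x j).
  move=> j; rewrite /x; case: (hq j) => ->.
    by rewrite mulr0 addr0; exact: (haP j).1.
  apply: ival_comb; [exact: hA|exact: (haP j).1|exact: hy|exact: t0|exact: t1].
exists x.
  split => //.
  rewrite big_split /= -mulr_sumr.
  have -> : \sum_(j < n) q j = sg * P by rewrite mulr_sumr.
  rewrite mulrCA tP -sgD mulrA sg2 mul1r /D; lra.
rewrite key //.
have s1 : \sum_(j < n) `|x j - c j| <= `|D| + \sum_(j < n) `|a j - c j|.
  rewrite -tP mulr_sumr -big_split /=; apply: ler_sum => j _.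
  by rewrite -hxa; exact: ler_distD.
have s2 : `|D| <= `|z - \sum_(j < n) c j| + \sum_(j < n) `|a j - c j|.
  apply: (le_trans (ler_distD (\sum_(j < n) c j) _ _)); rewrite lerD2l.
  rewrite -sumrB; apply: le_trans (ler_norm_sum _ _ _) _; apply: ler_sum => j _.
  by rewrite distrC.
move: sumac nd s1 s2; set N := n%:R * d; set S1 := \sum_(j < n) `|a j - c j|.
set S2 := \sum_(j < n) `|x j - c j|; move=> *; lra.
Qed.
Lemma msum_ival (R : realType) n (A : 'I_n -> set R) :
  (forall j, ival (A j)) ->
  ival [set z | exists y : 'I_n -> R, (forall j, A j (y j)) /\ \sum_(j < n) y j = z].
Proof.
move=> hA; rewrite /Defs.interval => z1 z2 z [y1 [hy1 e1]] [y2 [hy2 e2]] h1 h2.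
have [eq12|ne12] := eqVneq z1 z2.
  move: h2; rewrite -eq12 => h2.
  by exists y1; split => //; rewrite e1; apply/eqP; rewrite eq_le h1 h2.
have lt12 : z1 < z2 by rewrite lt_neqAle ne12 (le_trans h1 h2).
pose t := (z - z1) / (z2 - z1).
have d0 : 0 < z2 - z1 by rewrite subr_gt0.
have t0 : 0 <= t by apply: divr_ge0; rewrite subr_ge0 //; exact: ltW.
have t1 : t <= 1 by rewrite /t ler_pdivrMr // mul1r lerD2r.
exists (fun j => y1 j + t * (y2 j - y1 j)); split.
  by move=> j; apply: ival_comb.
rewrite big_split /= -mulr_sumr sumrB e1 e2 /t divfK ?gt_eqF //; lra.
Qed.

Lemma sup_eq (R : realType) (E : set R) B :
  (forall e, E e -> e <= B) ->
  (forall eps, 0 < eps -> exists2 e, E e & B - eps < e) -> sup E = B.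
Proof.
move=> hub hap.
have hne : E !=set0 by have [e Ee _] := hap 1 ltr01; exists e.
have hs : has_sup E by split => //; exists B.
apply/eqP; rewrite eq_le ge_sup //=.
rewrite leNgt; apply/negP => hlt.
have hpos : 0 < B - sup E by rewrite subr_gt0.
have [e Ee he] := hap (B - sup E) hpos.
have := sup_upper_bound hs Ee; lra.
Qed.

Lemma nat_index (R : realType) (g : R -> R) (X : set R) :
  piecewise_chi g X ->
  exists p : nat * (nat -> set R) * (nat -> R * R),
    [/\ forall i, ival (p.1.2 i),
        X = [set x | exists2 i, (i < p.1.1)%N & p.1.2 i x],
        forall i, (p.1.1 <= i)%N -> p.1.2 i = set0
      & forall i x, p.1.2 i x -> g x = chi (p.2 i) x].
Proof.
move=> [m [I [tau [h1 h2 h3 h4]]]].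
exists (m, (fun i => match insub i with Some o => I o | None => set0 end),
           (fun i => match insub i with Some o => tau o | None => (0, 0) end)) => /=.
split.
- move=> i; case: insubP => [o _ _|_]; first exact: h1.
  by rewrite /Defs.interval => x y z [].
- rewrite h3; apply/seteqP; split => x.
    case=> o _ Ix; exists (val o); first exact: ltn_ord.
    by rewrite valK.
  case=> i him; case: insubP => [o _ _ Ix|] //; by exists o.
- by move=> i hi; case: insubP => [o ho _|] //; move: ho; rewrite ltnNge hi.
- move=> i x; case: insubP => [o _ _ Ix|_ []] //; exact: h4.
Qed.
Unset Implicit Arguments.

Theorem proposition2 (R : realType) (n : nat) (X : 'I_n -> set R)
    (g : 'I_n -> R -> R) :
  (forall j, fin_union_closed_intervals (X j)) ->
  (forall j, piecewise_chi (g j) (X j)) ->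
  piecewise_chi (star g X) (minkowski_sum X).
Proof.
move=> _ hg.
have := fun j => nat_index (hg j); move/boolp.choice => [pp hpp].
pose M j := (pp j).1.1. pose II j := (pp j).1.2. pose TT j := (pp j).2.
have hI : forall j i, ival (II j i) by move=> j i; case: (hpp j) => h1 *; exact: h1.
have hX : forall j, X j = [set x | exists2 i, (i < M j)%N & II j i x] by move=> j; case: (hpp j) => _ h2 *; exact: h2.
have hE : forall j i, (M j <= i)%N -> II j i = set0 by move=> j; case: (hpp j) => _ _ h3 *; exact: h3.
have hG : forall j i x, II j i x -> g j x = chi (TT j i) x by move=> j; case: (hpp j) => _ _ _ h4; exact: h4.
pose Mx := (\max_(j < n) M j)%N.
pose K := {ffun 'I_n -> 'I_Mx}.
pose A (k : K) j := II j (k j).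
pose J (k : K) := [set z | exists y : 'I_n -> R, (forall j, A k j (y j)) /\ \sum_(j < n) y j = z].
have hconv := fun k : K => conv_chi (fun j => TT j (k j)) (fun j => hI j (k j)).
have [sg hsg] := boolp.choice hconv.
have hJ : forall k, ival (J k) by move=> k; apply: msum_ival => j; exact: hI.
have hpick : forall x : 'I_n -> R, (forall j, X j (x j)) -> exists k : K, forall j, A k j (x j).
  move=> x hx.
  have he : forall j, exists o : 'I_Mx, II j o (x j).
    move=> j; move: (hx j); rewrite hX => -[i him Ix].
    have iMx : (i < Mx)%N by apply: (leq_trans him); exact: (leq_bigmax j).
    by exists (Ordinal iMx).
  have [e he'] := boolp.choice he.
  by exists (finfun e) => j; rewrite /A ffunE.
have hinX : forall k j x, A k j x -> X j x.
  move=> k j x Ax; rewrite hX; exists (k j) => //.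
  rewrite ltnNge; apply/negP => hle; move: Ax; rewrite /A hE //.
pose W (k : K) := [set z | J k z /\ forall l, J l z -> chi (sg l) z <= chi (sg k) z].
have hstar : forall k z, W k z -> star g X z = chi (sg k) z.
  move=> k z [Jkz hmax]; rewrite /star; apply: sup_eq.
    move=> e [x [hx hxz] <-].
    have [k' hk'] := hpick x hx.
    have Jk'z : J k' z by exists x.
    apply: le_trans (hmax k' Jk'z).
    have -> : \sum_(j < n) g j (x j) = \sum_(j < n) chi (TT j (k' j)) (x j).
      by apply: eq_bigr => j _; apply: hG; exact: hk'.
    exact: ((hsg k' z Jk'z).1 x hk' hxz).
  move=> eps eps0; have [x [hx hxz] hlt] := (hsg k z Jkz).2 eps eps0.
  exists (\sum_(j < n) g j (x j)).
    exists x => //; split => // j; exact: (hinX k j _ (hx j)).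
  have -> : \sum_(j < n) g j (x j) = \sum_(j < n) chi (TT j (k j)) (x j).
    by apply: eq_bigr => j _; apply: hG; exact: hx.
  exact: hlt.
have hcover : minkowski_sum X = foldr (fun k acc => W k `|` acc) set0 (enum K).
  apply/seteqP; split => z.
    move=> [x [hx hxz]]; apply/foldUE.
    have [k0 hk0] := hpick x hx.
    have Jk0 : J k0 z by exists x.
    have P0 : `[< J k0 z >] by apply/asboolP.
    case: (@Order.TotalTheory.arg_maxP _ _ _ k0 (fun k => `[< J k z >]) (fun k => chi (sg k) z) P0).
    move=> k /asboolP Jkz hmax; exists k; first by rewrite mem_enum.
    split => // l Jlz; apply: hmax; exact/asboolP.
  move/foldUE => [k _ [[y [hy hyz]] _]]; exists y; split => // j; exact: (hinX k j _ (hy j)).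
apply: pcs_piecewise; rewrite hcover; apply: pcs_foldU => k.
have hWk : W k = foldr (fun l acc => ((J k `\` J l) `|` (J k `&` [set z | chi (sg l) z <= chi (sg k) z])) `&` acc) (J k) (enum K).
  apply/seteqP; split => z.
    move=> [Jkz hmax]; apply/foldIE; split => // l _.
    have [Jlz|nJlz] := pselect (J l z); last by left.
    by right; split => //; exact: hmax.
  move/foldIE => [Jkz hall]; split => // l Jlz.
  have := hall l; rewrite mem_enum => /(_ isT) [[_ //]|[_ h]] //.
apply: (pcs_ext (F := chi (sg k))); last first.
  by move=> z Wz; rewrite (hstar k z Wz).
rewrite hWk; apply: pcs_foldI.
  apply: (pcs1 (s := sg k)) => //.
move=> l; apply: pcs_union.
  apply: pcs_diff1 => //; exact: (pcs1 (s := sg k)).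
apply: (pcs1 (s := sg k)) => //; apply: interval_setI => //; exact: interval_le.
Qed.
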